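(* Let $Y$ and $X$ be real-valued square integrable random variables on a common probability space, and let $\mathcal{H}_0=\{\delta(X)\in L^2:\ \delta:\mathbb{R}\to\mathbb{R}\text{ measurable},\ E[\delta(X)]=0\}$. Then $$\iota_X(Y)=\sup_{\delta(X)\in\mathcal{H}_0}\frac{E[Y\delta(X)]}{\operatorname{SD}[\delta(X)]}=\sup_{\delta(X)\in\mathcal{H}_0,\ \delta(X)\ge -1}\frac{E[Y\delta(X)]}{\operatorname{SD}[\delta(X)]},$$ where both suprema range over those $\delta(X)$ with $\operatorname{SD}[\delta(X)]>0$.
   Context: The mean impact of $X$ on $Y$ is $\iota_X(Y)=\sup\{E[Y\delta(X)]:\ \delta\text{ measurable},\ \delta(X)\in L^2,\ E[\delta(X)]=0,\ E[\delta^2(X)]=1\}$. $\operatorname{SD}$ denotes standard deviation. *)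

(* Defs.v *)
From HB Require Import structures.
From mathcomp Require Import all_boot all_order all_algebra.
From mathcomp Require Import all_classical all_reals all_analysis.
Set Implicit Arguments. Unset Strict Implicit. Unset Printing Implicit Defensive.
Import Order.TTheory GRing.Theory Num.Theory.
Local Open Scope classical_set_scope.
Local Open Scope ring_scope.

Section MeanImpact.
Context (d : measure_display) (T : measurableType d) (R : realType)
        (P : probability T R).

Definition sq_integrable (f : T -> R) : Prop :=
  measurable_fun setT f /\ P.-integrable setT (fun t => (f t ^+ 2)%:E).

(* expectation (real-valued; used only for integrable functions) *)
Definition Ex (f : T -> R) : R := Rintegral P setT f.

Definition SD (f : T -> R) : R :=
  Num.sqrt (Ex (fun t => (f t - Ex f) ^+ 2)).

Definition H0 (X : T -> R) (delta : R -> R) : Prop :=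
  measurable_fun setT delta /\ sq_integrable (delta \o X) /\ Ex (delta \o X) = 0.

Definition mean_impact (X Y : T -> R) : \bar R :=
  ereal_sup [set (Ex (fun t => Y t * delta (X t)))%:E | delta in
    [set delta | H0 X delta /\ Ex (fun t => delta (X t) ^+ 2) = 1]].

End MeanImpact.

(* Main.v *)
Require Import Defs.
From HB Require Import structures.
From mathcomp Require Import all_boot all_order all_algebra.
From mathcomp Require Import all_classical all_reals all_analysis.
From mathcomp Require Import ring lra measurable_realfun.
Import Order.TTheory GRing.Theory Num.Theory numFieldNormedType.Exports.
Local Open Scope classical_set_scope.
Local Open Scope ring_scope.
Set Implicit Arguments. Unset Strict Implicit.

Section Helpers.
Context (d : measure_display) (T : measurableType d) (R : realType)
        (P : probability T R).
Local Notation I f := (P.-integrable setT (EFin \o f)).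
Local Notation L2 := (sq_integrable P).

Lemma I_eq (f g : T -> R) : f =1 g -> I f -> I g.
Proof. by move=> fg; apply: eq_integrable => // x _ /=; rewrite fg. Qed.

Lemma I_D (f g : T -> R) : I f -> I g -> I (fun x => f x + g x).
Proof.
move=> hf hg; apply: eq_integrable (integrableD _ hf hg) => //.
Qed.

Lemma I_Z k (f : T -> R) : I f -> I (fun x => k * f x).
Proof.
move=> hf; apply: eq_integrable (integrableZl _ k hf) => //.
Qed.

Lemma I_N (f : T -> R) : I f -> I (fun x => - f x).
Proof. by move=> hf; apply: (I_eq _ (I_Z (-1) hf)) => x; rewrite mulN1r. Qed.

Lemma I_cst (k : R) : I (fun _ => k).
Proof. exact: finite_measure_integrable_cst. Qed.

Lemma I_meas (f : T -> R) : I f -> measurable_fun setT f.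
Proof. by move=> /measurable_int /measurable_EFinP. Qed.

Lemma I_le (f g : T -> R) : measurable_fun setT f ->
  (forall x, `|f x| <= `|g x|) -> I g -> I f.
Proof.
move=> mf fg; apply: le_integrable => //; first exact/measurable_EFinP.
by move=> x _ /=; rewrite lee_fin.
Qed.

Lemma L2_I (f : T -> R) : L2 f -> I f.
Proof.
move=> [mf hf]; apply: (I_le (g := fun x => 1 + f x ^+ 2)) => //.
  move=> x; rewrite [X in _ <= X]ger0_norm; last by rewrite addr_ge0 // sqr_ge0.
  have [f0|f0] := leP 0 (f x).
    by rewrite ger0_norm //; nra.
  by rewrite ltr0_norm //; nra.
exact: I_D (I_cst 1) hf.
Qed.

Lemma L2_prod (f g : T -> R) : L2 f -> L2 g -> I (fun x => f x * g x).
Proof.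
move=> [mf hf] [mg hg]; apply: (I_le (g := fun x => f x ^+ 2 + g x ^+ 2)).
- exact: measurable_funM.
- move=> x; rewrite [X in _ <= X]ger0_norm; last by rewrite addr_ge0 // sqr_ge0.
  have h1 := sqr_ge0 (f x - g x); have h2 := sqr_ge0 (f x + g x).
  rewrite sqrrB in h1; rewrite sqrrD in h2.
  have h3 := sqr_ge0 (f x); have h4 := sqr_ge0 (g x).
  have [f0|f0] := leP 0 (f x * g x).
    by rewrite ger0_norm //; lra.
  by rewrite ltr0_norm //; lra.
- exact: I_D.
Qed.

Lemma L2_meas (f : T -> R) : L2 f -> measurable_fun setT f.
Proof. by case. Qed.

Lemma L2_cst (k : R) : L2 (fun _ => k).
Proof. split => //; exact: I_cst. Qed.

Lemma L2_D (f g : T -> R) : L2 f -> L2 g -> L2 (fun x => f x + g x).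
Proof.
move=> hf hg; split; first exact: measurable_funD (L2_meas hf) (L2_meas hg).
apply: (I_eq (f := fun x => f x ^+ 2 + (2 * (f x * g x) + g x ^+ 2))).
  by move=> x /=; rewrite sqrrD; ring.
apply: I_D; first exact: hf.2.
apply: I_D; last exact: hg.2.
by apply: I_Z; apply: L2_prod.
Qed.

Lemma L2_Z k (f : T -> R) : L2 f -> L2 (fun x => k * f x).
Proof.
move=> hf; split; first by apply: measurable_funM => //; exact: L2_meas hf.
apply: (I_eq (f := fun x => k ^+ 2 * f x ^+ 2)); first by move=> x /=; rewrite exprMn.
by apply: I_Z; exact: hf.2.
Qed.

Lemma L2_le (f g : T -> R) : measurable_fun setT f ->
  (forall x, `|f x| <= `|g x|) -> L2 g -> L2 f.
Proof.
move=> mf fg hg; split => //; apply: (I_le _ _ hg.2).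
  exact: measurable_funX.
move=> x; rewrite !normrX !expr2; apply: ler_pM => //; exact: fg.
Qed.

Lemma Ex_D (f g : T -> R) : I f -> I g ->
  Ex P (fun x => f x + g x) = Ex P f + Ex P g.
Proof. by move=> hf hg; rewrite /Ex RintegralD. Qed.

Lemma Ex_Z k (f : T -> R) : I f -> Ex P (fun x => k * f x) = k * Ex P f.
Proof. by move=> hf; rewrite /Ex RintegralZl. Qed.

Lemma Ex_cst (k : R) : Ex P (fun _ => k) = k.
Proof.
rewrite /Ex Rintegral_cst //.
rewrite [fine _](_ : _ = 1) ?mulr1 //.
have h := probability_setT P.
by transitivity (fine (1%E : \bar R)) => //; congr fine; exact: h.
Qed.

Lemma Ex_ge0 (f : T -> R) : (forall x, 0 <= f x) -> 0 <= Ex P f.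
Proof. by move=> h; apply: Rintegral_ge0 => x _; exact: h. Qed.

Lemma Ex_ext (f g : T -> R) : f =1 g -> Ex P f = Ex P g.
Proof. by move=> fg; rewrite /Ex; apply: eq_Rintegral => x _; rewrite fg. Qed.


Lemma Ex_dct (k : nat -> T -> R) (G : T -> R) :
  (forall n, measurable_fun setT (k n)) -> I G ->
  (forall n x, `|k n x| <= G x) -> (forall x, k ^~ x @ \oo --> 0) ->
  (fun n => Ex P (k n)) @ \oo --> 0.
Proof.
move=> mk iG kG k0.
have [] := @dominated_convergence _ T R P setT measurableT
  (fun n => EFin \o k n) (cst 0%E) (EFin \o G).
- by move=> n; apply/measurable_EFinP.
- exact: measurable_cst.
- apply: aeW => x _; apply/fine_cvgP; split; first exact: nearW.
  exact: k0.
- exact: iG.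
- by apply: aeW => x n _; rewrite /= lee_fin.
move=> _ _ h; rewrite integral0 in h.
exact: (fine_cvg h).
Qed.

Lemma absM_le (a b : R) : `|a * b| <= a ^+ 2 + b ^+ 2.
Proof.
have h1 := sqr_ge0 (a - b); have h2 := sqr_ge0 (a + b).
rewrite sqrrB in h1; rewrite sqrrD in h2.
have h3 := sqr_ge0 a; have h4 := sqr_ge0 b.
have [f0|f0] := leP 0 (a * b).
  by rewrite ger0_norm //; lra.
by rewrite ltr0_norm //; lra.
Qed.

Lemma abs_le1 (a : R) : `|a| <= 1 + a ^+ 2.
Proof.
have [f0|f0] := leP 0 a.
  by rewrite ger0_norm //; nra.
by rewrite ltr0_norm //; nra.
Qed.

Lemma SD_H0 (X : T -> R) (δ : R -> R) : H0 P X δ ->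
  SD P (δ \o X) = Num.sqrt (Ex P (fun t => δ (X t) ^+ 2)).
Proof.
move=> [_ [_ E0]]; rewrite /SD E0; congr Num.sqrt.
by apply: Ex_ext => t; rewrite subr0.
Qed.

Lemma scale_H0 (X Y : T -> R) (δ : R -> R) (k : R) : L2 Y -> H0 P X δ -> 0 < k ->
  H0 P X (fun x => δ x / k) /\
  SD P ((fun x => δ x / k) \o X) = SD P (δ \o X) / k /\
  Ex P (fun t => Y t * (δ (X t) / k)) = Ex P (fun t => Y t * δ (X t)) / k.
Proof.
move=> LY hd k0; have [md [Ld E0]] := hd.
have eqf : (fun x => δ x / k) \o X = (fun t => k^-1 * (δ \o X) t).
  by apply: funext => t; rewrite /= mulrC.
have hd' : H0 P X (fun x => δ x / k).
  split; first by apply: measurable_funM => //.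
  rewrite eqf; split; first exact: L2_Z.
  by rewrite Ex_Z ?E0 ?mulr0 //; exact: L2_I.
split => //; split.
  rewrite (SD_H0 hd') (SD_H0 hd).
  rewrite (Ex_ext (g := fun t => k^-1 ^+ 2 * δ (X t) ^+ 2)); last first.
    by move=> t; rewrite mulrC exprMn.
  rewrite Ex_Z; last exact: Ld.2.
  rewrite sqrtrM ?sqr_ge0 // sqrtr_sqr ger0_norm ?invr_ge0 ?ltW //.
  by rewrite mulrC.
rewrite (Ex_ext (g := fun t => k^-1 * (Y t * δ (X t)))); last first.
  by move=> t; rewrite mulrA mulrC.
rewrite Ex_Z; [by rewrite mulrC | exact: L2_prod].
Qed.

Lemma ev0_cvg (u : nat -> R) : (\forall n \near \oo, u n = 0) -> u @ \oo --> 0.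
Proof. exact: cvg_near_cst. Qed.

Lemma lem_bound (A B C M : R) : - A - B <= C -> - A + - M <= B + C - M.
Proof. by move=> h; lra. Qed.

End Helpers.

Section Main.
Context (d : measure_display) (T : measurableType d) (R : realType)
        (P : probability T R).
Local Notation I f := (P.-integrable setT (EFin \o f)).
Local Notation L2 := (sq_integrable P).

Lemma part1 (X Y : T -> R) : L2 Y ->
  mean_impact P X Y =
    ereal_sup [set (Ex P (fun t => Y t * delta (X t)) / SD P (delta \o X))%:E
              | delta in [set delta | H0 P X delta /\ 0 < SD P (delta \o X)]].
Proof.
move=> LY; rewrite /mean_impact; congr ereal_sup.
apply/seteqP; split => _ [δ hδ <-].
- have [hd E1] := hδ.
  have sd1 : SD P (δ \o X) = 1 by rewrite (SD_H0 hd) E1 sqrtr1.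
  exists δ; first by split => //; rewrite sd1.
  by rewrite sd1 divr1.
- have [hd sp] := hδ.
  have [hd' [sd' ey']] := scale_H0 LY hd sp.
  exists (fun x => δ x / SD P (δ \o X)).
    split => //.
    move: sd'; rewrite (SD_H0 hd') divff ?gt_eqF // => h.
    have := sqr_sqrtr (Ex_ge0 P (fun t => sqr_ge0 (δ (X t) / SD P (δ \o X)))).
    by rewrite h expr1n.
  by congr EFin; exact: ey'.
Qed.


Ltac solveI := repeat first [ exact: I_cst | apply: I_D | apply: I_Z | assumption ].

Lemma approx (X Y : T -> R) (δ : R -> R) (e : R) : L2 Y -> H0 P X δ ->
  0 < SD P (δ \o X) -> 0 < e ->
  exists δ', [/\ H0 P X δ', 0 < SD P (δ' \o X), (forall t, -1 <= δ' (X t)) &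
    Ex P (fun t => Y t * δ (X t)) / SD P (δ \o X) - e <
    Ex P (fun t => Y t * δ' (X t)) / SD P (δ' \o X)].
Proof.
move=> LY hd sp e0; have [md [Lf Ef]] := hd.
pose hn (n : nat) (y : R) := Num.max 0 (- (n.+1)%:R - y).
pose H n t := hn n (δ (X t)).
have H0' n t : 0 <= H n t by rewrite /H /hn le_max lexx.
have Hle n t : H n t <= `|δ (X t)|.
  rewrite /H /hn ge_max normr_ge0 /=.
  have := ler_norm (- δ (X t)); rewrite normrN.
  have : 0 <= (n.+1)%:R :> R by [].
  lra.
have mhn n : measurable_fun setT (hn n).
  by apply: measurable_maxr => //; exact: measurable_funB.
have mf : measurable_fun setT (fun t => δ (X t)) by exact: (L2_meas Lf).
have Hmeas n : measurable_fun setT (H n).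
  exact: measurableT_comp (mhn n) mf.
have HL2 n : L2 (H n).
  apply: (L2_le (Hmeas n) _ Lf) => t.
  by rewrite (ger0_norm (H0' n t)); exact: Hle.
have evH t : \forall n \near \oo, H n t = 0.
  exists (Num.bound `|δ (X t)|) => // n /= Nn.
  have hN := archi_boundP (normr_ge0 (δ (X t))).
  have hNn : (Num.bound `|δ (X t)|)%:R < (n.+1)%:R :> R by rewrite ltr_nat ltnS.
  rewrite /H /hn max_l //.
  have := ler_norm (- δ (X t)); rewrite normrN.
  lra.
pose a n := Ex P (fun t => Y t * H n t).
pose m n := Ex P (H n).
pose b n := Ex P (fun t => δ (X t) * H n t).
pose c n := Ex P (fun t => H n t ^+ 2).
have a0 : a @ \oo --> 0.
  apply: (@Ex_dct _ _ _ P (fun n t => Y t * H n t) (fun t => Y t ^+ 2 + δ (X t) ^+ 2)).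
  - by move=> n; apply: measurable_funM; [exact: L2_meas LY|exact: Hmeas].
  - exact: I_D LY.2 Lf.2.
  - move=> n t; apply: le_trans (absM_le _ _).
    rewrite !normrM ler_wpM2l // (ger0_norm (H0' n t)); exact: Hle.
  - move=> t; apply: ev0_cvg; apply: (filterS _ (evH t)) => n /= ->.
    by rewrite mulr0.
have m0 : m @ \oo --> 0.
  apply: (@Ex_dct _ _ _ P H (fun t => 1 + δ (X t) ^+ 2)).
  - exact: Hmeas.
  - exact: I_D (I_cst P 1) Lf.2.
  - move=> n t; apply: le_trans (abs_le1 _).
    rewrite (ger0_norm (H0' n t)); exact: Hle.
  - by move=> t; apply: ev0_cvg; apply: (filterS _ (evH t)) => n /= ->.
have b0 : b @ \oo --> 0.
  apply: (@Ex_dct _ _ _ P (fun n t => δ (X t) * H n t) (fun t => δ (X t) ^+ 2)).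
  - by move=> n; apply: measurable_funM; [exact: mf|exact: Hmeas].
  - exact: Lf.2.
  - move=> n t; rewrite normrM (ger0_norm (H0' n t)) -(real_normK (num_real (δ (X t)))) expr2.
    by apply: ler_wpM2l => //; exact: Hle.
  - move=> t; apply: ev0_cvg; apply: (filterS _ (evH t)) => n /= ->.
    by rewrite mulr0.
have c0 : c @ \oo --> 0.
  apply: (@Ex_dct _ _ _ P (fun n t => H n t ^+ 2) (fun t => δ (X t) ^+ 2)).
  - by move=> n; apply: measurable_funX; exact: Hmeas.
  - exact: Lf.2.
  - move=> n t; rewrite ger0_norm ?sqr_ge0 // -(real_normK (num_real (δ (X t)))) !expr2.
    by apply: ler_pM => //; exact: Hle.
  - move=> t; apply: ev0_cvg; apply: (filterS _ (evH t)) => n /= ->.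
    by rewrite expr0n.
pose gg n x := δ x + hn n (δ x) - m n.
have If : I (fun t => δ (X t)) by exact: L2_I Lf.
have IY : I Y by exact: L2_I LY.
have IYf : I (fun t => Y t * δ (X t)) by exact: L2_prod LY Lf.
have If2 : I (fun t => δ (X t) ^+ 2) by exact: Lf.2.
have Ef' : Ex P (fun t => δ (X t)) = 0 by exact: Ef.
have hg n : H0 P X (gg n).
  have IH := L2_I (HL2 n).
  split.
    rewrite /gg; apply: measurable_funB => //; apply: measurable_funD => //.
    exact: measurableT_comp (mhn n) md.
  split; first exact: (L2_D (L2_D Lf (HL2 n)) (L2_cst P (- m n))).
  rewrite (@Ex_ext _ _ _ P _ (fun t => (δ (X t) + H n t) + (- m n))) //.
  rewrite !Ex_D; try solveI.
  by rewrite Ex_cst Ef' add0r; exact: subrr.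
have E1 n : Ex P (fun t => Y t * gg n (X t)) =
    Ex P (fun t => Y t * δ (X t)) + a n - m n * Ex P Y.
  have IYH := L2_prod LY (HL2 n).
  rewrite (@Ex_ext _ _ _ P _ (fun t => (Y t * δ (X t) + Y t * H n t) + (- m n) * Y t)); last first.
    by move=> t; rewrite /gg /H; ring.
  rewrite !Ex_D; try solveI.
  by rewrite Ex_Z // mulNr.
have E2 n : Ex P (fun t => gg n (X t) ^+ 2) =
    Ex P (fun t => δ (X t) ^+ 2) + 2 * b n + c n - m n * m n.
  have IH := L2_I (HL2 n).
  have IfH : I (fun t => δ (X t) * H n t) by exact: L2_prod Lf (HL2 n).
  have IH2 : I (fun t => H n t ^+ 2) by exact: (HL2 n).2.
  rewrite (@Ex_ext _ _ _ P _ (fun t => ((((δ (X t) ^+ 2 + 2 * (δ (X t) * H n t)) + H n t ^+ 2)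
       + (-2 * m n) * δ (X t)) + (-2 * m n) * H n t) + m n ^+ 2)); last first.
    by move=> t; rewrite /gg /H; ring.
  rewrite !Ex_D; try solveI.
  rewrite !Ex_Z; try solveI.
  rewrite Ex_cst Ef'.
  rewrite -/(b n) -/(c n).
  have -> : Ex P (fun t => H n t) = m n by [].
  ring.
pose V := Ex P (fun t => δ (X t) ^+ 2).
pose EYf := Ex P (fun t => Y t * δ (X t)).
pose EY := Ex P Y.
have sdV : SD P (δ \o X) = Num.sqrt V by exact: SD_H0 hd.
have V0 : 0 < V by rewrite -sqrtr_gt0 -sdV.
pose E2s n := V + 2 * b n + c n - m n * m n.
pose E1s n := EYf + a n - m n * EY.
have E2cv : E2s @ \oo --> V.
  have h1 : (fun n => V + 2 * b n) @ \oo --> V + 2 * 0.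
    apply: cvgD; first exact: cvg_cst.
    by apply: cvgM; [exact: cvg_cst|exact: b0].
  have h2 : (fun n => V + 2 * b n + c n) @ \oo --> V + 2 * 0 + 0.
    by apply: cvgD; [exact: h1|exact: c0].
  have h3 : E2s @ \oo --> V + 2 * 0 + 0 - 0 * 0.
    by apply: cvgB; [exact: h2|apply: cvgM; [exact: m0|exact: m0]].
  by rewrite !(mulr0, mul0r, addr0, subr0, oppr0) in h3.
have E1cv : E1s @ \oo --> EYf.
  have h1 : (fun n => EYf + a n) @ \oo --> EYf + 0.
    by apply: cvgD; [exact: cvg_cst|exact: a0].
  have h3 : E1s @ \oo --> EYf + 0 - 0 * EY.
    by apply: cvgB; [exact: h1|apply: cvgM; [exact: m0|exact: cvg_cst]].
  by rewrite !(mulr0, mul0r, addr0, subr0, oppr0) in h3.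
have Scv : (fun n => Num.sqrt (E2s n)) @ \oo --> Num.sqrt V.
  exact: (continuous_cvg _ (@sqrt_continuous R V) E2cv).
have rcv : (fun n => E1s n / Num.sqrt (E2s n)) @ \oo --> EYf / Num.sqrt V.
  apply: cvgM; first exact: E1cv.
  apply: cvgV; last exact: Scv.
  by rewrite gt_eqF // sqrtr_gt0.
have ev1 := @cvgr_gt R nat eventually _ E2s V E2cv 0 V0.
have lte : EYf / Num.sqrt V - e < EYf / Num.sqrt V by rewrite ltrBlDr ltrDl.
have ev2 := @cvgr_gt R nat eventually _ _ _ rcv _ lte.
case: ev1 => N1 _ h1; case: ev2 => N2 _ h2.
pose n := maxn N1 N2.
have p1 : 0 < E2s n by apply: h1; rewrite /= leq_maxl.
have p2 : EYf / Num.sqrt V - e < E1s n / Num.sqrt (E2s n) by apply: h2; rewrite /= leq_maxr.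
pose k := (n.+1)%:R + m n.
have m_ge0 : 0 <= m n by apply: Ex_ge0 => t; exact: H0' n t.
have k0 : 0 < k by rewrite /k; apply: ltr_pwDl.
have [hd' [sd' ey']] := scale_H0 LY (hg n) k0.
have sdg : SD P (gg n \o X) = Num.sqrt (E2s n) by rewrite (SD_H0 (hg n)) E2.
exists (fun x => gg n x / k); split.
- exact: hd'.
- rewrite sd' sdg. by rewrite divr_gt0 // sqrtr_gt0.
- move=> t /=; rewrite ler_pdivlMr // /gg mulN1r /k opprD.
  apply: lem_bound.
  by rewrite /hn le_max lexx orbT.
- have -> : Ex P (fun t => Y t * (fun x => gg n x / k) (X t)) =
      Ex P (fun t => Y t * gg n (X t)) / k by exact: ey'.
  rewrite sd' sdg E1 sdV.
  have -> : Ex P (fun t => Y t * δ (X t)) + a n - m n * Ex P Y = E1s n by [].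
  suff -> : E1s n / k / (Num.sqrt (E2s n) / k) = E1s n / Num.sqrt (E2s n) by [].
  have sq0 : Num.sqrt (E2s n) != 0 by rewrite gt_eqF // sqrtr_gt0.
  field; rewrite sq0 gt_eqF //.
Qed.

End Main.

Theorem mainTheorem5 (d : measure_display) (T : measurableType d) (R : realType)
    (P : probability T R) (X Y : T -> R) :
  sq_integrable P X -> sq_integrable P Y ->
  mean_impact P X Y =
    ereal_sup [set (Ex P (fun t => Y t * delta (X t)) / SD P (delta \o X))%:E
              | delta in [set delta | H0 P X delta /\ 0 < SD P (delta \o X)]]
  /\
  mean_impact P X Y =
    ereal_sup [set (Ex P (fun t => Y t * delta (X t)) / SD P (delta \o X))%:E
              | delta in [set delta | H0 P X delta /\ 0 < SD P (delta \o X)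
                                      /\ {ae P, forall t, -1 <= delta (X t)}]].
Proof.
move=> _ LY; have h1 := part1 X LY; split => //.
rewrite h1; apply/eqP; rewrite eq_le; apply/andP; split; last first.
  by apply: ereal_sup_le => _ [δ [hd [sp _]] <-]; exists δ.
apply: ge_ereal_sup => _ [δ [hd sp] <-].
apply/lee_addgt0Pr => e e0.
have [δ' [hd' sp' hb hr]] := approx LY hd sp e0.
apply: (@le_trans _ _ ((Ex P (fun t => Y t * δ' (X t)) / SD P (δ' \o X))%:E + e%:E)).
  by rewrite -EFinD lee_fin -lerBlDr; exact: ltW.
apply: leeD => //; apply: ereal_sup_ubound; exists δ' => //.
split => //; split => //; exact: aeW.
Qed.
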